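(* Let $R$ be an s-unital ring and let $(P,Q,\psi)$ be an s-unital $R$-system. Suppose that $(S,T,\sigma,B)$ is a semi-full covariant representation of $(P,Q,\psi)$, that $(P,Q,\psi)$ satisfies Condition (FS), and that the ideal $I^{(k)}_{\psi,\sigma}$ of $B_0$ is s-unital for every $k\ge0$. Then $B$ is nearly epsilon-strongly $\mathbb{Z}$-graded.
   Context: Rings are associative, not necessarily unital; for additive subsets $X,Y$ of a ring, $XY$ is the additive subgroup generated by products $xy$. For rings $A,B$, an $A$-$B$-bimodule $M$ is s-unital if for every $x\in M$ there are $a\in A,b\in B$ with $ax=x=xb$. A ring $R$ is s-unital if it is s-unital as an $R$-$R$-bimodule; an ideal is s-unital if it is s-unital as a ring. A $\mathbb{Z}$-graded ring $B=\bigoplus_iB_i$ is nearly epsilon-strongly graded if each $B_i$ is an s-unital $B_iB_{-i}$-$B_{-i}B_i$-bimodule. An $R$-system is a triple $(P,Q,\psi)$ with $P,Q$ $R$-bimodules and $\psi:P\otimes_RQ\to R$ an $R$-bimodule homomorphism; it is s-unital if $R$ is s-unital and $P,Q$ are s-unital $R$-$R$-bimodules. Put $P^{\otimes0}=Q^{\otimes0}=R$, $\psi_0(r\otimes r')=rr'$, $\psi_1=\psi$, and for $n>1$: $Q^{\otimes n}=Q^{\otimes(n-1)}\otimes_RQ$, $P^{\otimes n}=P\otimes_RP^{\otimes(n-1)}$, $\psi_n((p_1\otimes p_2)\otimes(q_2\otimes q_1))=\psi(p_1\psi_{n-1}(p_2\otimes q_2)\otimes q_1)$. A covariant representation is a tuple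 $(S,T,\sigma,B)$ with $B$ a ring, $S:P\to B$, $T:Q\to B$ additive maps, $\sigma:R\to B$ a ring homomorphism, with $S(pr)=S(p)\sigma(r)$, $S(rp)=\sigma(r)S(p)$, $T(qr)=T(q)\sigma(r)$, $T(rq)=\sigma(r)T(q)$, $\sigma(\psi(p\otimes q))=S(p)T(q)$. It is graded if $B$ is generated as a ring by $\sigma(R)\cup S(P)\cup T(Q)$ and $B$ carries a $\mathbb{Z}$-grading with $\sigma(R)\subseteq B_0$, $T(Q)\subseteq B_1$, $S(P)\subseteq B_{-1}$. For a graded covariant representation and $k\ge0$, $I^{(k)}_{\psi,\sigma}$ is the ideal of $B_0$ generated by $\{\sigma(\psi_k(p\otimes q)):p\in P^{\otimes k},q\in Q^{\otimes k}\}$; the (graded) representation is semi-full if $B_{-k}B_k=I^{(k)}_{\psi,\sigma}$ for all $k\ge0$. For $q\in Q,p\in P$ let $\theta_{q,p}(x)=q\psi(p\otimes x)$ ($x\in Q$) and $\theta_{p,q}(y)=\psi(y\otimes q)p$ ($y\in P$); $\mathcal{F}_P(Q)$, $\mathcal{F}_Q(P)$ are the additive groups generated by these maps. Condition (FS): for all finite sets $\{q_i\}\subseteq Q$, $\{p_j\}\subseteq P$ there are $\Theta\in\mathcal{F}_P(Q)$, $\Phi\in\mathcal{F}_Q(P)$ with $\Theta(q_i)=q_i$, $\Phi(p_j)=p_j$. *)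

(* Defs.v *)
From HB Require Import structures.
From mathcomp Require Import all_boot all_order all_algebra.
Set Implicit Arguments. Unset Strict Implicit. Unset Printing Implicit Defensive.
Import Order.TTheory GRing.Theory Num.Theory.
Local Open Scope ring_scope.

Record rng := Rng {
  rsort :> zmodType;
  rmul : rsort -> rsort -> rsort;
  rmulA : forall x y z, rmul x (rmul y z) = rmul (rmul x y) z;
  rmulDl : forall x y z, rmul (x + y) z = rmul x z + rmul y z;
  rmulDr : forall x y z, rmul x (y + z) = rmul x y + rmul x z }.

Declare Scope rng_scope.
Notation "x ** y" := (rmul x y) (at level 40, left associativity) : rng_scope.
Open Scope rng_scope.

Record bimod (A B : rng) := Bimod {
  msort :> zmodType;
  lact : A -> msort -> msort;
  ract : msort -> B -> msort;
  lactDl : forall a a' m, lact (a + a') m = lact a m + lact a' m;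
  lactDr : forall a m m', lact a (m + m') = lact a m + lact a m';
  ractDl : forall m m' b, ract (m + m') b = ract m b + ract m' b;
  ractDr : forall m b b', ract m (b + b') = ract m b + ract m b';
  lactA : forall a a' m, lact (a ** a') m = lact a (lact a' m);
  ractA : forall m b b', ract m (b ** b') = ract (ract m b) b';
  lact_ract : forall a m b, lact a (ract m b) = ract (lact a m) b }.

Notation "a *> m" := (lact a m) (at level 40) : rng_scope.
Notation "m <* b" := (ract m b) (at level 40) : rng_scope.

Definition s_unital_bimod (A B : rng) (M : bimod A B) : Prop :=
  forall x : M, exists (a : A) (b : B), a *> x = x /\ x <* b = x.

Definition s_unital_rng (R : rng) : Prop :=
  forall x : R, exists a b : R, a ** x = x /\ x ** b = x.

(* An R-bimodule homomorphism psi : P (x)_R Q -> R is encoded, via the universal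
   property of the balanced tensor product, as an R-balanced biadditive map
   P -> Q -> R which is left R-linear in P and right R-linear in Q. *)
Record rsystem (R : rng) := RSystem {
  sysP : bimod R R;
  sysQ : bimod R R;
  psi : sysP -> sysQ -> R;
  psiDl : forall p p' q, psi (p + p') q = psi p q + psi p' q;
  psiDr : forall p q q', psi p (q + q') = psi p q + psi p q';
  psi_bal : forall p r q, psi (p <* r) q = psi p (r *> q);
  psi_lin_l : forall r p q, psi (r *> p) q = r ** psi p q;
  psi_lin_r : forall p q r, psi p (q <* r) = psi p q ** r }.

Definition s_unital_rsystem (R : rng) (sys : rsystem R) : Prop :=
  s_unital_rng R /\ s_unital_bimod (sysP sys) /\ s_unital_bimod (sysQ sys).

(* psi_k on elementary tensors:
   psiE [:: p1; ...; pk] [:: q1; ...; qk]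
     = psi_k ((p1 (x) ... (x) pk) (x) (qk (x) ... (x) q1))
     = psi (p1 <* psi_{k-1}((p2 (x) .. (x) pk) (x) (qk (x) .. (x) q2)) , q1). *)
Fixpoint psiE (R : rng) (sys : rsystem R) (ps : seq (sysP sys)) (qs : seq (sysQ sys))
    : R :=
  match ps, qs with
  | [:: p], [:: q] => psi p q
  | p :: ps', q :: qs' => psi (p <* psiE ps' qs') q
  | _, _ => 0
  end.
Arguments psiE {R} sys ps qs.

Inductive addspan (M : zmodType) (X : M -> Prop) : M -> Prop :=
  | as_gen x : X x -> addspan X x
  | as_zero : addspan X 0
  | as_sub x y : addspan X x -> addspan X y -> addspan X (x - y).

Definition prodset (B : rng) (X Y : B -> Prop) : B -> Prop :=
  addspan (fun z => exists x y, X x /\ Y y /\ z = x ** y).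

Inductive subrng_gen (B : rng) (X : B -> Prop) : B -> Prop :=
  | sr_gen x : X x -> subrng_gen X x
  | sr_zero : subrng_gen X 0
  | sr_sub x y : subrng_gen X x -> subrng_gen X y -> subrng_gen X (x - y)
  | sr_mul x y : subrng_gen X x -> subrng_gen X y -> subrng_gen X (x ** y).

Inductive ideal_gen (B : rng) (A G : B -> Prop) : B -> Prop :=
  | ig_gen x : G x -> ideal_gen A G x
  | ig_zero : ideal_gen A G 0
  | ig_sub x y : ideal_gen A G x -> ideal_gen A G y -> ideal_gen A G (x - y)
  | ig_mull a x : A a -> ideal_gen A G x -> ideal_gen A G (a ** x)
  | ig_mulr x a : A a -> ideal_gen A G x -> ideal_gen A G (x ** a).

Definition s_unital_subset (B : rng) (I : B -> Prop) : Prop :=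
  forall x, I x -> exists a b, I a /\ I b /\ a ** x = x /\ x ** b = x.

Definition Zgrading (B : rng) (Bi : int -> B -> Prop) : Prop :=
  [/\ (forall i, Bi i 0 /\ forall x y, Bi i x -> Bi i y -> Bi i (x - y)),
      (forall i j x y, Bi i x -> Bi j y -> Bi (i + j) (x ** y)),
      (forall x : B, exists (s : seq int) (f : int -> B),
          (forall i, Bi i (f i)) /\ x = \sum_(i <- s) f i) &
      (forall (s : seq int) (f : int -> B), uniq s -> (forall i, Bi i (f i)) ->
          \sum_(i <- s) f i = 0 -> forall i, i \in s -> f i = 0)].

(* nearly epsilon-strongly graded: each B_i is an s-unital
   B_i B_{-i} - B_{-i} B_i -bimodule *)
Definition nearly_eps_strong (B : rng) (Bi : int -> B -> Prop) : Prop :=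
  forall i x, Bi i x -> exists a b,
    prodset (Bi i) (Bi (- i)) a /\ prodset (Bi (- i)) (Bi i) b /\
    a ** x = x /\ x ** b = x.

Definition covrep (R : rng) (sys : rsystem R) (B : rng)
    (S : sysP sys -> B) (T : sysQ sys -> B) (sigma : R -> B) : Prop :=
  [/\ (forall p p', S (p + p') = S p + S p') /\
      (forall q q', T (q + q') = T q + T q'),
      (forall r r', sigma (r + r') = sigma r + sigma r') /\
      (forall r r', sigma (r ** r') = sigma r ** sigma r'),
      (forall p r, S (p <* r) = S p ** sigma r) /\
      (forall r p, S (r *> p) = sigma r ** S p),
      (forall q r, T (q <* r) = T q ** sigma r) /\
      (forall r q, T (r *> q) = sigma r ** T q) &
      (forall p q, sigma (psi p q) = S p ** T q)].

Definition graded_covrep (R : rng) (sys : rsystem R) (B : rng)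
    (S : sysP sys -> B) (T : sysQ sys -> B) (sigma : R -> B)
    (Bi : int -> B -> Prop) : Prop :=
  [/\ covrep S T sigma,
      (forall b : B, subrng_gen
         (fun x => (exists r, x = sigma r) \/ (exists p, x = S p) \/
                   (exists q, x = T q)) b),
      Zgrading Bi,
      (forall r, Bi 0 (sigma r)) &
      (forall q, Bi 1 (T q)) /\ (forall p, Bi (-1) (S p))].

(* generators of I^{(k)}: sigma(psi_k(p (x) q)); for k >= 1 over elementary
   tensors p = p1 (x) .. (x) pk, q = qk (x) .. (x) q1 (these generate the
   same ideal), and sigma(r r') for k = 0. *)
Definition Igens (R : rng) (sys : rsystem R) (B : rng) (sigma : R -> B)
    (k : nat) : B -> Prop :=
  fun x => match k with
  | 0%N => exists r r' : R, x = sigma (r ** r')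
  | _ => exists (ps : seq (sysP sys)) (qs : seq (sysQ sys)),
           size ps = k /\ size qs = k /\ x = sigma (psiE sys ps qs)
  end.

Definition Ik (R : rng) (sys : rsystem R) (B : rng) (sigma : R -> B)
    (Bi : int -> B -> Prop) (k : nat) : B -> Prop :=
  ideal_gen (Bi 0) (Igens sys sigma k).

Definition semi_full (R : rng) (sys : rsystem R) (B : rng) (sigma : R -> B)
    (Bi : int -> B -> Prop) : Prop :=
  forall (k : nat) (x : B),
    prodset (Bi (- (k%:Z))) (Bi (k%:Z)) x <-> Ik sys sigma Bi k x.

Inductive FPQ (R : rng) (sys : rsystem R) : (sysQ sys -> sysQ sys) -> Prop :=
  | fpq_theta (q : sysQ sys) (p : sysP sys) : FPQ (fun x => q <* psi p x)
  | fpq_zero : FPQ (fun _ => 0)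
  | fpq_sub f g : FPQ f -> FPQ g -> FPQ (fun x => f x - g x).

Inductive FQP (R : rng) (sys : rsystem R) : (sysP sys -> sysP sys) -> Prop :=
  | fqp_theta (p : sysP sys) (q : sysQ sys) : FQP (fun y => psi y q *> p)
  | fqp_zero : FQP (fun _ => 0)
  | fqp_sub f g : FQP f -> FQP g -> FQP (fun y => f y - g y).

Definition condFS (R : rng) (sys : rsystem R) : Prop :=
  forall (qs : seq (sysQ sys)) (ps : seq (sysP sys)),
    exists Theta Phi, FPQ Theta /\ FQP Phi /\
      (forall q, q \in qs -> Theta q = q) /\ (forall p, p \in ps -> Phi p = p).

(* Main.v *)
Require Import Defs.
From HB Require Import structures.
From mathcomp Require Import all_boot all_order all_algebra.
From mathcomp Require Import zify.
Set Implicit Arguments. Unset Strict Implicit. Unset Printing Implicit Defensive.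
Import Order.TTheory GRing.Theory Num.Theory.
Local Open Scope ring_scope.
Local Open Scope rng_scope.

Section RngLemmas.
Variable B : rng.
Implicit Types x y z : B.
Lemma rmul0r x : (0 : B) ** x = 0.
Proof. by apply: (@addrI _ ((0:B) ** x)); rewrite -rmulDl !addr0. Qed.
Lemma rmulr0 x : x ** (0 : B) = 0.
Proof. by apply: (@addrI _ (x ** 0)); rewrite -rmulDr !addr0. Qed.
Lemma rmulNr x y : (- x) ** y = - (x ** y).
Proof. by apply/eqP; rewrite -subr_eq0 opprK -rmulDl addNr rmul0r. Qed.
Lemma rmulrN x y : x ** (- y) = - (x ** y).
Proof. by apply/eqP; rewrite -subr_eq0 opprK -rmulDr addNr rmulr0. Qed.
Lemma rmulBl x y z : (x - y) ** z = x ** z - y ** z.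
Proof. by rewrite rmulDl rmulNr. Qed.
Lemma rmulBr x y z : x ** (y - z) = x ** y - x ** z.
Proof. by rewrite rmulDr rmulrN. Qed.
Lemma rmul_suml (I : Type) (r : seq I) (P : pred I) (F : I -> B) y :
  (\sum_(i <- r | P i) F i) ** y = \sum_(i <- r | P i) (F i ** y).
Proof. by apply: (big_morph (fun x => x ** y)) => [a b|]; rewrite ?rmulDl ?rmul0r. Qed.
Lemma rmul_sumr (I : Type) (r : seq I) (P : pred I) (F : I -> B) y :
  y ** (\sum_(i <- r | P i) F i) = \sum_(i <- r | P i) (y ** F i).
Proof. by apply: (big_morph (rmul y)) => [a b|]; rewrite ?rmulDr ?rmulr0. Qed.

Lemma addspan_add (X : B -> Prop) x y : addspan X x -> addspan X y -> addspan X (x + y).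
Proof.
move=> hx hy; have -> : x + y = x - (0 - y) by rewrite sub0r opprK.
by apply: as_sub => //; apply: as_sub => //; apply: as_zero.
Qed.

Lemma prodset_gen (X Y : B -> Prop) x y : X x -> Y y -> prodset X Y (x ** y).
Proof. by move=> hx hy; apply: as_gen; exists x, y. Qed.

Lemma prodset_mul (X Y X' Y' : B -> Prop) c d e :
  (forall x, X x -> X' (c ** x)) -> (forall y, Y y -> Y' (y ** d)) ->
  prodset X Y e -> prodset X' Y' (c ** e ** d).
Proof.
move=> hX hY; elim => [z [x [y [hx [hy ->]]]]| |u v _ hu _ hv].
- by rewrite rmulA -[_ ** y ** d]rmulA; apply: prodset_gen; auto.
- by rewrite rmulr0 rmul0r; apply: as_zero.
- by rewrite rmulBr rmulBl; apply: as_sub.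
Qed.
End RngLemmas.
Section Main.
Variables (R : rng) (sys : rsystem R) (B : rng)
    (S : sysP sys -> B) (T : sysQ sys -> B) (sigma : R -> B)
    (Bi : int -> B -> Prop).
Hypothesis HR : s_unital_rng R.
Hypothesis HP : s_unital_bimod (sysP sys).
Hypothesis HQ : s_unital_bimod (sysQ sys).
Hypothesis SD : forall p p', S (p + p') = S p + S p'.
Hypothesis TD : forall q q', T (q + q') = T q + T q'.
Hypothesis sigD : forall r r', sigma (r + r') = sigma r + sigma r'.
Hypothesis sigM : forall r r', sigma (r ** r') = sigma r ** sigma r'.
Hypothesis S_r : forall p r, S (p <* r) = S p ** sigma r.
Hypothesis S_l : forall r p, S (r *> p) = sigma r ** S p.
Hypothesis T_r : forall q r, T (q <* r) = T q ** sigma r.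
Hypothesis T_l : forall r q, T (r *> q) = sigma r ** T q.
Hypothesis ST : forall p q, sigma (psi p q) = S p ** T q.
Hypothesis Hgen : forall b : B, subrng_gen
         (fun x => (exists r, x = sigma r) \/ (exists p, x = S p) \/
                   (exists q, x = T q)) b.
Hypothesis Bsub : forall i, Bi i 0 /\ forall x y, Bi i x -> Bi i y -> Bi i (x - y).
Hypothesis BM : forall i j x y, Bi i x -> Bi j y -> Bi (i + j) (x ** y).
Hypothesis Buniq : forall (s : seq int) (f : int -> B), uniq s -> (forall i, Bi i (f i)) ->
          \sum_(i <- s) f i = 0 -> forall i, i \in s -> f i = 0.
Hypothesis Bsig : forall r, Bi 0 (sigma r).
Hypothesis BT : forall q, Bi 1 (T q).
Hypothesis BS : forall p, Bi (-1) (S p).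
Hypothesis Hsf : semi_full sys sigma Bi.
Hypothesis HFS : condFS sys.
Hypothesis HI : forall k : nat, s_unital_subset (Ik sys sigma Bi k).

Lemma T_add : {morph T : x y / x + y}. Proof. exact: TD. Qed.
Lemma T0 : T 0 = 0.
Proof. by apply: (@addrI _ (T 0)); rewrite -TD !addr0. Qed.
Lemma TB x y : T (x - y) = T x - T y.
Proof. apply: (@addrI _ (T y)); rewrite -TD addrC subrK addrC subrK //. Qed.
Lemma S0 : S 0 = 0.
Proof. by apply: (@addrI _ (S 0)); rewrite -SD !addr0. Qed.
Lemma SB x y : S (x - y) = S x - S y.
Proof. apply: (@addrI _ (S y)); rewrite -SD addrC subrK addrC subrK //. Qed.
Lemma sig0 : sigma 0 = 0.
Proof. by apply: (@addrI _ (sigma 0)); rewrite -sigD !addr0. Qed.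
Lemma sigB x y : sigma (x - y) = sigma x - sigma y.
Proof. apply: (@addrI _ (sigma y)); rewrite -sigD addrC subrK addrC subrK //. Qed.
Lemma sigN x : sigma (- x) = - sigma x.
Proof. by rewrite -sub0r sigB sig0 sub0r. Qed.

Lemma Bi0 i : Bi i 0. Proof. by case: (Bsub i). Qed.
Lemma BiB i x y : Bi i x -> Bi i y -> Bi i (x - y). Proof. by case: (Bsub i) => _; apply. Qed.
Lemma BiN i x : Bi i x -> Bi i (- x).
Proof. by move=> h; rewrite -sub0r; apply: BiB => //; apply: Bi0. Qed.
Lemma BiD i x y : Bi i x -> Bi i y -> Bi i (x + y).
Proof. by move=> hx hy; rewrite -[y]opprK; apply: BiB => //; apply: BiN. Qed.
Lemma Bisum i (I : Type) (r : seq I) (P : pred I) (F : I -> B) :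
  (forall j, P j -> Bi i (F j)) -> Bi i (\sum_(j <- r | P j) F j).
Proof. by move=> h; apply: big_ind => //; [apply: Bi0 | apply: BiD]. Qed.
Lemma Bi_eq i j x : i = j -> Bi i x -> Bi j x. Proof. by move->. Qed.

Fixpoint TW (n : nat) (y : B) : Prop :=
  match n with 0%N => exists r, y = sigma r
  | n'.+1 => exists q y', TW n' y' /\ y = T q ** y' end.
Fixpoint SW (n : nat) (y : B) : Prop :=
  match n with 0%N => exists r, y = sigma r
  | n'.+1 => exists p y', SW n' y' /\ y = y' ** S p end.
Definition NF (a b : nat) (m : B) := exists t u, TW a t /\ SW b u /\ m = t ** u.
Fixpoint PW (n : nat) (y : B) : Prop :=
  match n with 0%N => True
  | n'.+1 => exists q y', PW n' y' /\ y = T q ** y' end.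
Fixpoint PWs (n : nat) (y : B) : Prop :=
  match n with 0%N => True
  | n'.+1 => exists p y', PWs n' y' /\ y = y' ** S p end.

Lemma sig_TW n r t : TW n t -> TW n (sigma r ** t).
Proof.
case: n => [[r' ->]|n [q [y' [h ->]]]] /=; first by exists (r ** r'); rewrite sigM.
by exists (r *> q), y'; rewrite T_l rmulA.
Qed.
Lemma SW_sig n r u : SW n u -> SW n (u ** sigma r).
Proof.
case: n => [[r' ->]|n [p [y' [h ->]]]] /=; first by exists (r' ** r); rewrite sigM.
by exists (p <* r), y'; rewrite S_r rmulA.
Qed.
Lemma TW_cat a c t v : TW a t -> TW c v -> TW (a + c) (t ** v).
Proof.
elim: a t => [|a IH] t /=.
  by move=> [r ->] hv; rewrite add0n; apply: sig_TW.
move=> [q [y' [h ->]]] hv; rewrite ?addSn /=; exists q, (y' ** v).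
by rewrite rmulA; split => //; apply: IH.
Qed.
Lemma SW_cat a c u v : SW a u -> SW c v -> SW (a + c) (u ** v).
Proof.
elim: c v => [|c IH] v /=.
  by move=> hu [r ->]; rewrite addn0; apply: SW_sig.
move=> hu [p [y' [h ->]]]; rewrite ?addnS /=; exists p, (u ** y').
by rewrite rmulA; split => //; apply: IH.
Qed.
Lemma SW_TW b c u t : SW b u -> TW c t ->
  ((c <= b)%N -> SW (b - c) (u ** t)) /\ ((b <= c)%N -> TW (c - b) (u ** t)).
Proof.
elim: b c u t => [|b IH] c u t /=.
  move=> [r ->] ht; split; last by rewrite subn0 => _; apply: sig_TW.
  rewrite leqn0 => /eqP ec; move: ht; rewrite ec => -[r' ->] /=.
  by exists (r ** r'); rewrite sigM.
move=> [p [y' [hy ->]]]; case: c t => [|c] t /=.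
  move=> [r ->]; split => // _; exists (p <* r), y'; split => //.
  by rewrite S_r rmulA.
move=> [q [t' [ht ->]]].
have e : y' ** S p ** (T q ** t') = y' ** (sigma (psi p q) ** t').
  by rewrite ST !rmulA.
rewrite e subSS; have := IH c y' _ hy (sig_TW (psi p q) ht).
by rewrite !ltnS.
Qed.

Lemma SW_opp n u : SW n u -> SW n (- u).
Proof.
elim: n u => [|n IH] u /= ; first by move=> [r ->]; exists (- r); rewrite sigN.
move=> [p [y' [h ->]]]; exists p, (- y'); split; last by rewrite rmulNr.
exact: IH.
Qed.

Lemma TW_deg n t : TW n t -> Bi n t.
Proof.
elim: n t => [|n IH] t /=; first by move=> [r ->]; apply: Bsig.
move=> [q [y' [h ->]]]; rewrite intS; apply: BM => //; exact: IH.
Qed.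
Lemma SW_deg n u : SW n u -> Bi (- n%:Z) u.
Proof.
elim: n u => [|n IH] u /=; first by move=> [r ->]; apply: Bsig.
move=> [p [y' [h ->]]]; apply: (@Bi_eq (- n%:Z + -1)); first by lia.
apply: BM => //; exact: IH.
Qed.
Lemma NF_deg a b m : NF a b m -> Bi (a%:Z - b%:Z) m.
Proof.
move=> [t [u [ht [hu ->]]]]; apply: BM; [exact: TW_deg | exact: SW_deg].
Qed.

Definition nfa (a b c d : nat) := if (c <= b)%N then a else (a + (c - b))%N.
Definition nfb (a b c d : nat) := if (c <= b)%N then (b - c + d)%N else d.

Lemma NF_mul a b c d m m' : NF a b m -> NF c d m' ->
  NF (nfa a b c d) (nfb a b c d) (m ** m').
Proof.
move=> [t [u [ht [hu ->]]]] [t' [u' [ht' [hu' ->]]]].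
have [h1 h2] := SW_TW hu ht'.
rewrite /nfa /nfb; case: ifP => hcb.
  exists t, (u ** t' ** u'); split => //; split; last by rewrite !rmulA.
  by apply: SW_cat => //; apply: h1.
exists (t ** (u ** t')), u'; split; last by rewrite !rmulA.
by apply: TW_cat => //; apply: h2; move: hcb => /negbT; rewrite -ltnNge => /ltnW.
Qed.

Lemma NF_opp a b m : NF a b m -> NF a b (- m).
Proof.
move=> [t [u [ht [hu ->]]]]; exists t, (- u); split => //; split.
  exact: SW_opp.
by rewrite rmulrN.
Qed.

Lemma sig_unit r : exists a, sigma r = sigma a ** sigma r.
Proof. by have [a [b [ha _]]] := HR r; exists a; rewrite -sigM ha. Qed.

Lemma NF_sigma r : NF 0 0 (sigma r).
Proof.
have [a ha] := sig_unit r; exists (sigma a), (sigma r).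
by split; [exists a | split; [exists r|]].
Qed.
Lemma NF_T q : NF 1 0 (T q).
Proof.
have [a [r0 [_ hq]]] := HQ q; have [a1 [b1 [_ hb]]] := HR r0.
exists (T q ** sigma r0), (sigma b1); split; first by exists q, (sigma r0); split => //; exists r0.
split; first by exists b1.
by rewrite -rmulA -sigM hb -T_r hq.
Qed.
Lemma NF_S p : NF 0 1 (S p).
Proof.
have [r0 [b [hp _]]] := HP p; have [a1 [b1 [ha _]]] := HR r0.
exists (sigma a1), (sigma r0 ** S p); split; first by exists a1.
split; first by exists p, (sigma r0); split => //; exists r0.
by rewrite rmulA -sigM ha -S_l hp.
Qed.

Definition deg (l : nat * nat * B) : int := (l.1.1)%:Z - (l.1.2)%:Z.

Lemma decomp z : exists L : seq (nat * nat * B),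
  (forall l, l \in L -> NF l.1.1 l.1.2 l.2) /\ z = \sum_(l <- L) l.2.
Proof.
elim: (Hgen z) => {z}.
- move=> x [[r ->]|[[p ->]|[q ->]]].
  + by exists [:: (0%N, 0%N, sigma r)]; rewrite big_seq1; split => // l;
      rewrite inE => /eqP ->; apply: NF_sigma.
  + by exists [:: (0%N, 1%N, S p)]; rewrite big_seq1; split => // l;
      rewrite inE => /eqP ->; apply: NF_S.
  + by exists [:: (1%N, 0%N, T q)]; rewrite big_seq1; split => // l;
      rewrite inE => /eqP ->; apply: NF_T.
- by exists [::]; rewrite big_nil.
- move=> x y _ [Lx [hx ->]] _ [Ly [hy ->]].
  exists (Lx ++ [seq (l.1, - l.2) | l <- Ly]); split.
    move=> l; rewrite mem_cat => /orP[/hx //|/mapP [l' /hy h ->]] /=.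
    exact: NF_opp.
  by rewrite big_cat big_map /= sumrN.
- move=> x y _ [Lx [hx ->]] _ [Ly [hy ->]].
  pose f (l l' : nat * nat * B) :=
    (nfa l.1.1 l.1.2 l'.1.1 l'.1.2, nfb l.1.1 l.1.2 l'.1.1 l'.1.2, l.2 ** l'.2).
  exists [seq f l l' | l <- Lx, l' <- Ly]; split.
    move=> l /allpairsP [[l1 l2] [/= h1 h2 ->]] /=.
    by apply: NF_mul; [apply: hx | apply: hy].
  rewrite big_allpairs_dep /= rmul_suml; apply: eq_bigr => l _.
  by rewrite rmul_sumr.
Qed.

Lemma component (L : seq (nat * nat * B)) k z :
  (forall l, l \in L -> Bi (deg l) l.2) -> Bi k z -> z = \sum_(l <- L) l.2 ->
  z = \sum_(l <- L | deg l == k) l.2.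
Proof.
move=> hL hz hsum.
pose s := undup (k :: map deg L).
pose f i := \sum_(l <- L | deg l == i) l.2.
pose g i := f i - (if i == k then z else 0).
have us : uniq s := undup_uniq _.
have ks : k \in s by rewrite mem_undup mem_head.
have hg : forall i, Bi i (g i).
  move=> i; apply: BiB.
    rewrite /f big_seq_cond; apply: Bisum => l /andP[hl /eqP <-]; exact: hL.
  by case: eqP => [->|_]; [exact: hz | exact: Bi0].
have hf : \sum_(i <- s) f i = z.
  rewrite /f; under eq_bigr do rewrite big_mkcond.
  rewrite exchange_big /= hsum; apply: eq_big_seq => l hl.
  have ds : deg l \in s by rewrite mem_undup in_cons map_f ?orbT.
  rewrite (bigD1_seq (deg l)) //= eqxx big1 ?addr0 // => i /negPf.
  by rewrite eq_sym => ->.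
have hk : \sum_(i <- s) (if i == k then z else 0) = z.
  rewrite (bigD1_seq k) //= eqxx big1 ?addr0 // => i /negPf ->.
  by [].
have := Buniq us hg; rewrite /g sumrB hf hk subrr => /(_ erefl k ks).
rewrite eqxx => /eqP; rewrite subr_eq0 => /eqP <-; done.
Qed.

Lemma component_NF z k : Bi k z -> exists L : seq (nat * nat * B),
  (forall l, l \in L -> NF l.1.1 l.1.2 l.2 /\ deg l = k) /\ z = \sum_(l <- L) l.2.
Proof.
move=> hz; have [L [hL hs]] := decomp z.
exists [seq l <- L | deg l == k]; split.
  by move=> l; rewrite mem_filter => /andP[/eqP -> /hL].
rewrite big_filter; apply: component hz hs => l /hL; exact: NF_deg.
Qed.

Lemma PW_sig n r y : PW n.+1 y -> PW n.+1 (sigma r ** y).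
Proof. by move=> [q [y' [h ->]]]; exists (r *> q), y'; rewrite T_l rmulA. Qed.
Lemma PW_mulr n y c : PW n y -> PW n (y ** c).
Proof.
elim: n y => [//|n IH] y /= [q [y' [h ->]]].
by exists q, (y' ** c); rewrite rmulA; split => //; apply: IH.
Qed.
Lemma TW_PW n a t : TW a t -> (n <= a)%N -> PW n t.
Proof.
elim: n a t => [//|n IH] [|a] t //= [q [y' [h ->]]] hn.
by exists q, y'; split => //; apply: IH h hn.
Qed.
Lemma NF_PW n a b m : NF a b m -> (n <= a)%N -> PW n m.
Proof. by move=> [t [u [ht [hu ->]]]] hn; apply: PW_mulr; apply: TW_PW ht hn. Qed.

Lemma PWs_sig n r y : PWs n.+1 y -> PWs n.+1 (y ** sigma r).
Proof. by move=> [p [y' [h ->]]]; exists (p <* r), y'; rewrite S_r rmulA. Qed.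
Lemma PWs_mull n y c : PWs n y -> PWs n (c ** y).
Proof.
elim: n y => [//|n IH] y /= [p [y' [h ->]]].
by exists p, (c ** y'); rewrite rmulA; split => //; apply: IH.
Qed.
Lemma SW_PWs n b u : SW b u -> (n <= b)%N -> PWs n u.
Proof.
elim: n b u => [//|n IH] [|b] u //= [p [y' [h ->]]] hn.
by exists p, y'; split => //; apply: IH h hn.
Qed.
Lemma NF_PWs n a b m : NF a b m -> (n <= b)%N -> PWs n m.
Proof. by move=> [t [u [ht [hu ->]]]] hn; apply: PWs_mull; apply: SW_PWs hu hn. Qed.

Lemma extractT n (ys : seq B) : (forall y, y \in ys -> PW n.+1 y) ->
  exists Z : seq (sysQ sys * B), (forall z, z \in Z -> PW n z.2) /\
    forall y, y \in ys -> exists z, z \in Z /\ y = T z.1 ** z.2.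
Proof.
elim: ys => [|y ys IH] h; first by exists [::].
have [|Z [h1 h2]] := IH; first by move=> x hx; apply: h; rewrite in_cons hx orbT.
have [q [y' [hy' ey]]] := h y (mem_head _ _).
exists ((q, y') :: Z); split.
  by move=> z; rewrite in_cons => /orP[/eqP -> //|/h1].
move=> x; rewrite in_cons => /orP[/eqP ->|/h2 [z [hz ->]]].
  by exists (q, y'); rewrite mem_head.
by exists z; rewrite in_cons hz orbT.
Qed.

Lemma extractS n (ys : seq B) : (forall y, y \in ys -> PWs n.+1 y) ->
  exists Z : seq (sysP sys * B), (forall z, z \in Z -> PWs n z.2) /\
    forall y, y \in ys -> exists z, z \in Z /\ y = z.2 ** S z.1.
Proof.
elim: ys => [|y ys IH] h; first by exists [::].
have [|Z [h1 h2]] := IH; first by move=> x hx; apply: h; rewrite in_cons hx orbT.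
have [p [y' [hy' ey]]] := h y (mem_head _ _).
exists ((p, y') :: Z); split.
  by move=> z; rewrite in_cons => /orP[/eqP -> //|/h1].
move=> x; rewrite in_cons => /orP[/eqP ->|/h2 [z [hz ->]]].
  by exists (p, y'); rewrite mem_head.
by exists z; rewrite in_cons hz orbT.
Qed.

Lemma innerT0 Th : FPQ Th -> exists e, prodset (Bi 1) (Bi (-1)) e /\
  forall q y, e ** (T q ** y) = T (Th q) ** y.
Proof.
elim => [q p| |f g _ [e1 [h1 H1]] _ [e2 [h2 H2]]].
- exists (T q ** S p); split; first by apply: prodset_gen.
  move=> x y /=; rewrite T_r ST !rmulA //.
- by exists 0; split; [apply: as_zero | move=> q y; rewrite T0 !rmul0r].
- exists (e1 - e2); split; first by apply: as_sub.
  by move=> q y /=; rewrite rmulBl H1 H2 TB rmulBl.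
Qed.

Lemma innerT n :
  (forall ys : seq B, (forall y, y \in ys -> PW n.+1 y) -> exists e,
     prodset (Bi n.+1) (Bi (- n.+1%:Z)) e /\ forall y, y \in ys -> e ** y = y) ->
  forall Th, FPQ Th -> forall Z : seq (sysQ sys * B), (forall z, z \in Z -> PW n.+1 z.2) ->
  exists e, prodset (Bi n.+2) (Bi (- n.+2%:Z)) e /\
    forall z, z \in Z -> e ** (T z.1 ** z.2) = T (Th z.1) ** z.2.
Proof.
move=> IH Th; elim => [q p| |f g _ H1 _ H2] Z hZ.
- have [|c [hc Hc]] := IH [seq sigma (psi p z.1) ** z.2 | z <- Z].
    by move=> y /mapP [z hz ->]; apply: PW_sig; apply: hZ.
  exists (T q ** c ** S p); split.
    apply: prodset_mul hc => [x hx|y hy].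
      by apply: (@Bi_eq (1 + n.+1%:Z)); [lia | apply: BM].
    by apply: (@Bi_eq (- n.+1%:Z + -1)); [lia | apply: BM].
  move=> z hz /=.
  have e : T q ** c ** S p ** (T z.1 ** z.2) =
           T q ** (c ** (sigma (psi p z.1) ** z.2)) by rewrite ST !rmulA.
  rewrite e Hc; last by apply: map_f.
  by rewrite T_r rmulA.
- by exists 0; split; [apply: as_zero | move=> z _; rewrite T0 !rmul0r].
- have [e1 [h1 E1]] := H1 Z hZ; have [e2 [h2 E2]] := H2 Z hZ.
  exists (e1 - e2); split; first by apply: as_sub.
  by move=> z hz /=; rewrite rmulBl E1 // E2 // TB rmulBl.
Qed.

Lemma LUw n (ys : seq B) : (forall y, y \in ys -> PW n.+1 y) -> exists e,
  prodset (Bi n.+1) (Bi (- n.+1%:Z)) e /\ forall y, y \in ys -> e ** y = y.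
Proof.
elim: n ys => [|n IH] ys hys; have [Z [hZ hy]] := extractT hys;
  have [Th [Ph [hTh [_ [fix1 _]]]]] := HFS [seq z.1 | z <- Z] [::].
- have [e [he He]] := innerT0 hTh; exists e; split; first exact: he.
  move=> y /hy [z [hz ->]]; rewrite He fix1 //; exact: map_f.
- have [e [he He]] := innerT IH hTh hZ; exists e; split => //.
  move=> y /hy [z [hz ->]]; rewrite He // fix1 //; exact: map_f.
Qed.

Lemma innerS0 Ph : FQP Ph -> exists f, prodset (Bi 1) (Bi (-1)) f /\
  forall p y, (y ** S p) ** f = y ** S (Ph p).
Proof.
elim => [p' q| |f g _ [e1 [h1 H1]] _ [e2 [h2 H2]]].
- exists (T q ** S p'); split; first by apply: prodset_gen.
  move=> x y /=; rewrite S_l ST !rmulA //.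
- by exists 0; split; [apply: as_zero | move=> q y; rewrite S0 !rmulr0].
- exists (e1 - e2); split; first by apply: as_sub.
  by move=> q y /=; rewrite rmulBr H1 H2 SB rmulBr.
Qed.

Lemma innerS n :
  (forall ys : seq B, (forall y, y \in ys -> PWs n.+1 y) -> exists f,
     prodset (Bi n.+1) (Bi (- n.+1%:Z)) f /\ forall y, y \in ys -> y ** f = y) ->
  forall Ph, FQP Ph -> forall Z : seq (sysP sys * B), (forall z, z \in Z -> PWs n.+1 z.2) ->
  exists f, prodset (Bi n.+2) (Bi (- n.+2%:Z)) f /\
    forall z, z \in Z -> (z.2 ** S z.1) ** f = z.2 ** S (Ph z.1).
Proof.
move=> IH Ph; elim => [p' q| |f g _ H1 _ H2] Z hZ.
- have [|c [hc Hc]] := IH [seq z.2 ** sigma (psi z.1 q) | z <- Z].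
    by move=> y /mapP [z hz ->]; apply: PWs_sig; apply: hZ.
  exists (T q ** c ** S p'); split.
    apply: prodset_mul hc => [x hx|y hy].
      by apply: (@Bi_eq (1 + n.+1%:Z)); [lia | apply: BM].
    by apply: (@Bi_eq (- n.+1%:Z + -1)); [lia | apply: BM].
  move=> z hz /=.
  have e : z.2 ** S z.1 ** (T q ** c ** S p') =
           (z.2 ** sigma (psi z.1 q)) ** c ** S p' by rewrite ST !rmulA.
  rewrite e Hc; last by apply: (map_f (fun z => z.2 ** sigma (psi z.1 q))).
  by rewrite S_l rmulA.
- by exists 0; split; [apply: as_zero | move=> z _; rewrite S0 !rmulr0].
- have [e1 [h1 E1]] := H1 Z hZ; have [e2 [h2 E2]] := H2 Z hZ.
  exists (e1 - e2); split; first by apply: as_sub.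
  by move=> z hz /=; rewrite rmulBr E1 // E2 // SB rmulBr.
Qed.

Lemma RUw n (ys : seq B) : (forall y, y \in ys -> PWs n.+1 y) -> exists f,
  prodset (Bi n.+1) (Bi (- n.+1%:Z)) f /\ forall y, y \in ys -> y ** f = y.
Proof.
elim: n ys => [|n IH] ys hys; have [Z [hZ hy]] := extractS hys;
  have [Th [Ph [_ [hPh [_ fix1]]]]] := HFS [::] [seq z.1 | z <- Z].
- have [e [he He]] := innerS0 hPh; exists e; split; first exact: he.
  move=> y /hy [z [hz ->]]; rewrite He fix1 //; exact: map_f.
- have [e [he He]] := innerS IH hPh hZ; exists e; split => //.
  move=> y /hy [z [hz ->]]; rewrite He // fix1 //; exact: map_f.
Qed.

Lemma Ik_B0 k x : Ik sys sigma Bi k x -> Bi 0 x.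
Proof.
elim => {x} [x| |x y _ hx _ hy|a x ha _ hx|x a ha _ hx].
- by case: k => [[r [r' ->]]|k [ps [qs [_ [_ ->]]]]]; apply: Bsig.
- exact: Bi0.
- exact: BiB.
- by rewrite -[0]addr0; apply: BM.
- by rewrite -[0]addr0; apply: BM.
Qed.
Lemma Ik_sub k x y : Ik sys sigma Bi k x -> Ik sys sigma Bi k y -> Ik sys sigma Bi k (x - y).
Proof. exact: ig_sub. Qed.
Lemma Ik_0 k : Ik sys sigma Bi k 0. Proof. exact: ig_zero. Qed.
Lemma Ik_add k x y : Ik sys sigma Bi k x -> Ik sys sigma Bi k y -> Ik sys sigma Bi k (x + y).
Proof.
move=> hx hy; have -> : x + y = x - (0 - y) by rewrite sub0r opprK.
by apply: Ik_sub => //; apply: Ik_sub => //; apply: Ik_0.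
Qed.
Lemma Ik_mul k x y : Ik sys sigma Bi k x -> Ik sys sigma Bi k y -> Ik sys sigma Bi k (x ** y).
Proof. move=> hx hy; apply: ig_mulr => //; exact: Ik_B0 hy. Qed.

Definition RUset k x := exists f, Ik sys sigma Bi k f /\ x ** f = x.
Definition LUset k x := exists a, Ik sys sigma Bi k a /\ a ** x = x.

Lemma RU_I k x : Ik sys sigma Bi k x -> RUset k x.
Proof. by move=> /HI [a [b [_ [hb [_ e]]]]]; exists b. Qed.
Lemma LU_I k x : Ik sys sigma Bi k x -> LUset k x.
Proof. by move=> /HI [a [b [ha [_ [e _]]]]]; exists a. Qed.
Lemma RU_mull k c x : RUset k x -> RUset k (c ** x).
Proof. by move=> [f [hf e]]; exists f; rewrite -rmulA e. Qed.
Lemma LU_mulr k c x : LUset k x -> LUset k (x ** c).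
Proof. by move=> [f [hf e]]; exists f; rewrite rmulA e. Qed.
Lemma RU_0 k : RUset k 0. Proof. by exists 0; split; [apply: Ik_0 | rewrite rmul0r]. Qed.
Lemma LU_0 k : LUset k 0. Proof. by exists 0; split; [apply: Ik_0 | rewrite rmulr0]. Qed.
Lemma RU_sub k x y : RUset k x -> RUset k y -> RUset k (x - y).
Proof.
move=> [f1 [h1 e1]] [f2 [h2 e2]].
have hw : Ik sys sigma Bi k (f2 - f2 ** f1) by apply: Ik_sub => //; apply: Ik_mul.
have [_ [u [_ [hu [_ eu]]]]] := HI hw.
exists (f1 + u - f1 ** u); split.
  by apply: Ik_sub; [apply: Ik_add | apply: Ik_mul].
rewrite rmulBl; congr (_ - _).
  by rewrite rmulBr rmulDr rmulA e1 addrK.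
rewrite -{1}e2 -rmulA.
have -> : f2 ** (f1 + u - f1 ** u) = f2 ** f1 + (f2 - f2 ** f1) ** u.
  by rewrite rmulBr rmulDr rmulBl rmulA addrA.
by rewrite eu addrC subrK e2.
Qed.
Lemma LU_sub k x y : LUset k x -> LUset k y -> LUset k (x - y).
Proof.
move=> [a1 [h1 e1]] [a2 [h2 e2]].
have hw : Ik sys sigma Bi k (a2 - a1 ** a2) by apply: Ik_sub => //; apply: Ik_mul.
have [u [_ [hu [_ [eu _]]]]] := HI hw.
exists (a1 + u - u ** a1); split.
  by apply: Ik_sub; [apply: Ik_add | apply: Ik_mul].
rewrite rmulBr; congr (_ - _).
  by rewrite rmulBl rmulDl -rmulA e1 addrK.
rewrite -{1}e2 rmulA.
have -> : (a1 + u - u ** a1) ** a2 = a1 ** a2 + u ** (a2 - a1 ** a2).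
  by rewrite rmulBl rmulDl rmulBr -rmulA addrA.
by rewrite eu addrC subrK e2.
Qed.

Lemma RU_prod k (X Y : B -> Prop) e x : prodset X Y e ->
  (forall u v, X u -> Y v -> RUset k (u ** v ** x)) -> RUset k (e ** x).
Proof.
move=> he H; elim: he => [z [u [v [hu [hv ->]]]]| |a b _ ha _ hb].
- exact: H.
- by rewrite rmul0r; apply: RU_0.
- by rewrite rmulBl; apply: RU_sub.
Qed.
Lemma LU_prod k (X Y : B -> Prop) f x : prodset X Y f ->
  (forall u v, X u -> Y v -> LUset k (x ** (u ** v))) -> LUset k (x ** f).
Proof.
move=> he H; elim: he => [z [u [v [hu [hv ->]]]]| |a b _ ha _ hb].
- exact: H.
- by rewrite rmulr0; apply: LU_0.
- by rewrite rmulBr; apply: LU_sub.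
Qed.

Lemma NF_sigl a b m : NF a b m -> exists r, m = sigma r ** m.
Proof.
move=> [t [u [ht [hu ->]]]]; case: a ht => [[r' ->]|a [q [y' [_ ->]]]].
  by have [a0 e] := sig_unit r'; exists a0; rewrite rmulA -e.
have [r0 [_ [hq _]]] := HQ q; exists r0.
by rewrite !rmulA -T_l hq.
Qed.

Lemma deg0 x : Bi 0 x -> exists a b, prodset (Bi 0) (Bi (- 0%:Z)) a /\
  prodset (Bi (- 0%:Z)) (Bi 0) b /\ a ** x = x /\ x ** b = x.
Proof.
move=> hx; have [L [hL ex]] := component_NF hx.
have : Ik sys sigma Bi 0 x.
  rewrite ex big_seq; apply: big_ind => [|u v|l hl]; first exact: Ik_0.
    exact: Ik_add.
  have [hnf hd] := hL l hl; have [r er] := NF_sigl hnf.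
  apply/Hsf; rewrite er; apply: prodset_gen; first by rewrite oppr0; apply: Bsig.
  by apply: (@Bi_eq (deg l)); [rewrite hd | apply: NF_deg].
move=> /HI [a [b [ha [hb [ea eb]]]]]; exists a, b.
split; first by have := (Hsf 0 a).2 ha; rewrite oppr0.
by split => //; apply/Hsf.
Qed.

Lemma degpos k x : Bi k.+1 x -> exists a b, prodset (Bi k.+1) (Bi (- k.+1%:Z)) a /\
  prodset (Bi (- k.+1%:Z)) (Bi k.+1) b /\ a ** x = x /\ x ** b = x.
Proof.
move=> hx; have [L [hL ex]] := component_NF hx.
have [|e [he Ee]] := @LUw k [seq l.2 | l <- L].
  move=> y /mapP [l hl ->]; have [hnf hd] := hL l hl.
  apply: (NF_PW hnf); move: hd; rewrite /deg; move: (l.1.1) (l.1.2) => a b; lia.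
have eex : e ** x = x.
  rewrite [in LHS]ex rmul_sumr [in RHS]ex; apply: eq_big_seq => l hl.
  by apply: Ee; apply: map_f.
have : RUset k.+1 (e ** x).
  apply: (RU_prod he) => u v hu hv; rewrite -rmulA; apply: RU_mull; apply: RU_I.
  by apply/Hsf; apply: prodset_gen.
rewrite eex => -[f [hf ef]]; exists e, f; split => //; split => //.
by apply/Hsf.
Qed.

Lemma degneg k x : Bi (- k.+1%:Z) x -> exists a b, prodset (Bi (- k.+1%:Z)) (Bi k.+1) a /\
  prodset (Bi k.+1) (Bi (- k.+1%:Z)) b /\ a ** x = x /\ x ** b = x.
Proof.
move=> hx; have [L [hL ex]] := component_NF hx.
have [|f [hf Ef]] := @RUw k [seq l.2 | l <- L].
  move=> y /mapP [l hl ->]; have [hnf hd] := hL l hl.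
  apply: (NF_PWs hnf); move: hd; rewrite /deg; move: (l.1.1) (l.1.2) => a b; lia.
have exf : x ** f = x.
  rewrite [in LHS]ex rmul_suml [in RHS]ex; apply: eq_big_seq => l hl.
  by apply: Ef; apply: map_f.
have : LUset k.+1 (x ** f).
  apply: (LU_prod hf) => u v hu hv; rewrite rmulA; apply: LU_mulr; apply: LU_I.
  by apply/Hsf; apply: prodset_gen.
rewrite exf => -[a [ha ea]]; exists a, f; split => //.
by apply/Hsf.
Qed.

End Main.

Theorem mainTheorem8 (R : rng) (sys : rsystem R) (B : rng)
    (S : sysP sys -> B) (T : sysQ sys -> B) (sigma : R -> B)
    (Bi : int -> B -> Prop) :
  s_unital_rng R ->
  s_unital_rsystem sys ->
  graded_covrep S T sigma Bi ->
  semi_full sys sigma Bi ->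
  condFS sys ->
  (forall k : nat, s_unital_subset (Ik sys sigma Bi k)) ->
  nearly_eps_strong Bi.
Proof.
move=> HR [_ [HP HQ]] [[[SD TD] [sigD sigM] [S_r S_l] [T_r T_l] ST] Hgen
  [Bsub BM _ Buniq] Bsig [BT BS]] Hsf HFS HI i x.
case: i => [[|k]|k] hx.
- by eapply deg0; eassumption.
- by eapply degpos; eassumption.
- move: hx; rewrite NegzE opprK => hx.
  by eapply degneg; eassumption.
Qed.
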